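(* In the setting described in the context, for every node deployment $\mathbf{P}$, every cell partitioning $\mathbf{W}$ and every normalized flow matrix $\mathbf{S}$, $$\mathcal{D}(\mathbf{P},\mathbf{W},\mathbf{S})\ \ge\ \mathcal{D}\big(\mathbf{P},\mathcal{V}(\mathbf{P},\mathbf{S}),\mathbf{S}\big),$$ where $\mathcal{V}(\mathbf{P},\mathbf{S})$ is the generalized Voronoi diagram.
   Context: Let $\Omega\subset\mathbb{R}^2$ be a convex polygon (including its interior). Let $N,M\ge1$ be integers; $\mathcal{I_A}=\{1,\dots,N\}$ (access points, APs), $\mathcal{I_F}=\{N+1,\dots,N+M\}$ (fusion centers, FCs). A node deployment is $\mathbf{P}=(p_1,\dots,p_{N+M})$ with $p_n\in\Omega$. Let $f:\Omega\to\mathbb{R}^+$ be continuous and differentiable and $R_b>0$ a constant. A cell partitioning $\mathbf{W}=(W_1,\dots,W_N)$ is a partition of $\Omega$ into Borel sets; $v(W_n)=\int_{W_n}f(\omega)d\omega$. A normalized flow matrix $\mathbf{S}=[s_{i,j}]$, $i\in\mathcal{I_A}$, $j\in\mathcal{I_A}\cup\mathcal{I_F}$, satisfies $s_{i,j}\in[0,1]$, $\sum_{j=1}^{N+M}s_{i,j}=1$ for each $i$, and has no cycles: whenever $\prod_{k=1}^K s_{l_{k-1},l_k}>0$ then $s_{l_K,l_0}=0$ (in particular $s_{i,i}=0$). The flows $F_{i,j}(\mathbf{W},\mathbf{S})$ are the unique numbers with $F_{i,j}=s_{i,j}F_i$, where $F_i=\sum_{j=1}^{N+M}F_{i,j}=R_bv(W_i)+\sum_{j=1}^NF_{j,i}$.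 Positive constants $\eta_n$ ($n\in\mathcal{I_A}$), $\beta_{i,j}$ ($i\in\mathcal{I_A}$, $j\in\mathcal{I_A}\cup\mathcal{I_F}$), nonnegative constants $\rho_n$ ($n\in\mathcal{I_A}$) and $\lambda\ge0$ are given. The total communication power is $$\mathcal{D}(\mathbf{P},\mathbf{W},\mathbf{S})=\sum_{n=1}^N\int_{W_n}\eta_n\|p_n-\omega\|^2R_bf(\omega)d\omega+\lambda\Big[\sum_{i=1}^N\sum_{j=1}^{N+M}\beta_{i,j}\|p_i-p_j\|^2F_{i,j}+\sum_{n=1}^N\rho_n\Big(\sum_{i=1}^NF_{i,n}+R_bv(W_n)\Big)\Big].$$ AP power coefficient: for $n\in\mathcal{I_A}$, summing over all directed paths $L:n=l_0\to\cdots\to l_J$ with $l_0,\dots,l_{J-1}\in\mathcal{I_A}$, $l_J\in\mathcal{I_F}$, $\prod_i s_{l_{i-1},l_i}>0$, $g_n(\mathbf{P},\mathbf{S})=\sum_L\prod_{i=1}^Js_{l_{i-1},l_i}\big(\sum_{j=1}^J\beta_{l_{j-1},l_j}\|p_{l_{j-1}}-p_{l_j}\|^2+\sum_{j=1}^{J-1}\rho_{l_j}\big)$. Generalized Voronoi diagram: $\mathcal{V}(\mathbf{P},\mathbf{S})=(\mathcal{V}_1,\dots,\mathcal{V}_N)$ with $\mathcal{V}_n=\{\omega\in\Omega:\eta_n\|p_n-\omega\|^2+\lambda g_n(\mathbf{P},\mathbf{S})+\lambda\rho_n\le\eta_k\|p_k-\omega\|^2+\lambda g_k(\mathbf{P},\mathbf{S})+\lambda\rho_k\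 \forall k\ne n\}$, with ties broken in favor of the smaller index (so the $\mathcal{V}_n$ form a Borel partition of $\Omega$). *)

(* Defs.v *)
From mathcomp Require Import all_boot all_order all_algebra.
From mathcomp Require Import all_classical all_reals all_analysis.
Import Order.TTheory GRing.Theory Num.Theory.
Set Implicit Arguments. Unset Strict Implicit. Unset Printing Implicit Defensive.
Import numFieldNormedType.Exports.
Local Open Scope ring_scope.
Local Open Scope classical_set_scope.

(* The plane R^2 as a measurable space: product of the Borel sigma-algebras
   of R (= Borel sigma-algebra of R^2). *)
Notation plane R := (measurableTypeR R * measurableTypeR R)%type.

Definition leb2 (R : realType) : set (plane R) -> \bar R :=
  ((@lebesgue_measure R) \x (@lebesgue_measure R))%E.

Definition sqd (R : realType) (x y : R * R) : R :=
  (x.1 - y.1) ^+ 2 + (x.2 - y.2) ^+ 2.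

Definition convex_hull (R : realType) (vs : seq (R * R)) : set (R * R) :=
  [set x | exists lam : nat -> R,
     (forall i, 0 <= lam i) /\ \sum_(i < size vs) lam i = 1 /\
     x = (\sum_(i < size vs) lam i * (nth (0, 0) vs i).1,
          \sum_(i < size vs) lam i * (nth (0, 0) vs i).2)].

(* a (non-degenerate) convex polygon, including its interior *)
Definition convex_polygon (R : realType) (Om : set (R * R)) : Prop :=
  exists vs : seq (R * R), Om = convex_hull vs /\
    exists a b c, a \in vs /\ b \in vs /\ c \in vs /\
      (b.1 - a.1) * (c.2 - a.2) - (b.2 - a.2) * (c.1 - a.1) != 0.

(* nodes: inl i = access point i (i < N), inr j = fusion center j (j < M) *)
Definition node (N M : nat) := ('I_N + 'I_M)%type.

Definition isAP (N M : nat) (a : node N M) : bool :=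
  if a is inl _ then true else false.
Definition isFC (N M : nat) (a : node N M) : bool :=
  if a is inr _ then true else false.

Definition extm (R : realType) (N M : nat) (s : 'I_N -> node N M -> R)
  (a b : node N M) : R := if a is inl i then s i b else 0.
Definition extv (R : realType) (N M : nat) (r : 'I_N -> R) (a : node N M) : R :=
  if a is inl i then r i else 0.

Definition cell_partition (R : realType) (N : nat) (Om : set (R * R))
  (W : 'I_N -> set (plane R)) : Prop :=
  (forall n, measurable (W n)) /\
  (forall n m, n != m -> W n `&` W m = set0) /\
  (forall x, Om x <-> exists n, W n x).

Definition normalized_flow (R : realType) (N M : nat)
  (s : 'I_N -> node N M -> R) : Prop :=
  (forall i j, 0 <= s i j <= 1) /\
  (forall i, \sum_(j : node N M) s i j = 1) /\
  (forall (K : nat) (l : nat -> 'I_N),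
     0 < \prod_(k < K) s (l k) (inl (l k.+1)) -> s (l K) (inl (l 0%N)) = 0).

Definition vol (R : realType) (f : R * R -> R) (A : set (plane R)) : R :=
  Rintegral (@leb2 R) A f.

Definition is_flow (R : realType) (N M : nat) (Rb : R) (f : R * R -> R)
  (W : 'I_N -> set (plane R)) (s : 'I_N -> node N M -> R)
  (F : 'I_N -> node N M -> R) : Prop :=
  (forall i, \sum_(j : node N M) F i j = Rb * vol f (W i) + \sum_(k < N) F k (inl i)) /\
  (forall i j, F i j = s i j * \sum_(j' : node N M) F i j').

Definition Dpow (R : realType) (N M : nat) (Rb : R) (f : R * R -> R)
  (eta : 'I_N -> R) (beta : 'I_N -> node N M -> R) (rho : 'I_N -> R) (lam : R)
  (p : node N M -> R * R) (W : 'I_N -> set (plane R))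
  (F : 'I_N -> node N M -> R) : R :=
  \sum_(n < N) Rintegral (@leb2 R) (W n)
                 (fun w => eta n * sqd (p (inl n)) w * Rb * f w)
  + lam * (\sum_(i < N) \sum_(j : node N M) beta i j * sqd (p (inl i)) (p j) * F i j
           + \sum_(n < N) rho n * (\sum_(i < N) F i (inl n) + Rb * vol f (W n))).

Definition path_ok (R : realType) (N M : nat) (s : 'I_N -> node N M -> R)
  (n : 'I_N) (J : nat) (l : {ffun 'I_J.+1 -> node N M}) : bool :=
  [&& l ord0 == inl n,
      [forall k : 'I_J, isAP (l (widen_ord (leqnSn J) k))],
      isFC (l ord_max) &
      0 < \prod_(k < J) extm s (l (widen_ord (leqnSn J) k)) (l (lift ord0 k))].

(* AP power coefficient g_n(P, S).  Since S has no cycles, a path with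
   positive probability visits each AP at most once, so J <= N. *)
Definition gcoef (R : realType) (N M : nat) (beta : 'I_N -> node N M -> R)
  (rho : 'I_N -> R) (p : node N M -> R * R) (s : 'I_N -> node N M -> R)
  (n : 'I_N) : R :=
  \sum_(J < N.+1 | (0 < J)%N)
    \sum_(l : {ffun 'I_J.+1 -> node N M} | path_ok s n l)
      (\prod_(k < J) extm s (l (widen_ord (leqnSn J) k)) (l (lift ord0 k))) *
      (\sum_(k < J) extm beta (l (widen_ord (leqnSn J) k)) (l (lift ord0 k)) *
                    sqd (p (l (widen_ord (leqnSn J) k))) (p (l (lift ord0 k)))
       + \sum_(k < J | (0 < k)%N) extv rho (l (widen_ord (leqnSn J) k))).

Definition vcost (R : realType) (N M : nat) (eta : 'I_N -> R)
  (beta : 'I_N -> node N M -> R) (rho : 'I_N -> R) (lam : R)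
  (p : node N M -> R * R) (s : 'I_N -> node N M -> R) (n : 'I_N) (w : R * R) : R :=
  eta n * sqd (p (inl n)) w + lam * gcoef beta rho p s n + lam * rho n.

(* generalized Voronoi diagram, ties broken in favour of the smaller index *)
Definition voronoi (R : realType) (N M : nat) (Om : set (R * R)) (eta : 'I_N -> R)
  (beta : 'I_N -> node N M -> R) (rho : 'I_N -> R) (lam : R)
  (p : node N M -> R * R) (s : 'I_N -> node N M -> R) (n : 'I_N) : set (plane R) :=
  [set w | Om w /\ forall k : 'I_N,
     ((k < n)%N -> vcost eta beta rho lam p s n w < vcost eta beta rho lam p s k w) /\
     ((n < k)%N -> vcost eta beta rho lam p s n w <= vcost eta beta rho lam p s k w)].

(* Main.v *)
Require Import Defs.
From mathcomp Require Import all_boot all_order all_algebra.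
From mathcomp Require Import all_classical all_reals all_analysis.
From mathcomp Require Import zify ring lra.
Import Order.TTheory GRing.Theory Num.Theory.
Import numFieldNormedType.Exports.
Local Open Scope ring_scope.
Local Open Scope classical_set_scope.
Set Implicit Arguments. Unset Strict Implicit. Unset Printing Implicit Defensive.
Definition hFC (R : realType) (N M : nat) (a : node N M) : R := if isFC a then 1 else 0.
Definition hAP (R : realType) (N M : nat) (a : node N M) : R := if isAP a then 1 else 0.

Arguments hFC {R N M}.
Arguments hAP {R N M}.

Fixpoint WP (R : realType) (N M : nat) (A : node N M -> node N M -> R)
  (J : nat) (h : node N M -> R) (a : node N M) : R :=
  match J with 0 => h a | J'.+1 => \sum_b A a b * WP A J' h b end.

Fixpoint WC (R : realType) (N M : nat) (A cc : node N M -> node N M -> R)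
  (J : nat) (h : node N M -> R) (a : node N M) : R :=
  match J with 0 => 0 | J'.+1 => \sum_b A a b * (cc a b * WP A J' h b + WC A cc J' h b) end.

Definition prodw (R : realType) (T : finType) (A : T -> T -> R) J (l : {ffun 'I_J.+1 -> T}) : R :=
  \prod_(k < J) A (l (widen_ord (leqnSn J) k)) (l (lift ord0 k)).
Definition costw (R : realType) (T : finType) (A : T -> T -> R) J (l : {ffun 'I_J.+1 -> T}) : R :=
  \sum_(k < J) A (l (widen_ord (leqnSn J) k)) (l (lift ord0 k)).

Definition fcons (T : finType) J (a : T) (g : {ffun 'I_J.+1 -> T}) : {ffun 'I_J.+2 -> T} :=
  [ffun k : 'I_J.+2 => if unlift ord0 k is Some k' then g k' else a].
Definition ftail (T : finType) J (l : {ffun 'I_J.+2 -> T}) : {ffun 'I_J.+1 -> T} :=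
  [ffun k => l (lift ord0 k)].

Lemma fcons0 (T : finType) J a (g : {ffun 'I_J.+1 -> T}) : fcons a g ord0 = a.
Proof. by rewrite /fcons ffunE unlift_none. Qed.
Lemma fconsS (T : finType) J a (g : {ffun 'I_J.+1 -> T}) k : fcons a g (lift ord0 k) = g k.
Proof. by rewrite /fcons ffunE liftK. Qed.
Lemma fcons_max (T : finType) J a (g : {ffun 'I_J.+1 -> T}) : fcons a g ord_max = g ord_max.
Proof. by rewrite -(fconsS a g); congr (fcons a g _); apply: val_inj. Qed.
Lemma fconsK (T : finType) J (l : {ffun 'I_J.+2 -> T}) : fcons (l ord0) (ftail l) = l.
Proof.
apply/ffunP => k; rewrite /fcons ffunE; case: (unliftP ord0 k) => [j ->|->] //.
by rewrite ffunE.
Qed.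
Lemma ftailK (T : finType) J a (g : {ffun 'I_J.+1 -> T}) : ftail (fcons a g) = g.
Proof. by apply/ffunP => k; rewrite ffunE fconsS. Qed.

Lemma prodw_cons (R : realType) (T : finType) (A : T -> T -> R) J a (g : {ffun 'I_J.+1 -> T}) :
  prodw A (fcons a g) = A a (g ord0) * prodw A g.
Proof.
rewrite /prodw big_ord_recl.
have -> : widen_ord (leqnSn J.+1) ord0 = ord0 :> 'I_J.+2 by apply: val_inj.
rewrite fcons0 fconsS; congr (_ * _); apply: eq_bigr => k _.
have -> : widen_ord (leqnSn J.+1) (lift ord0 k) = lift ord0 (widen_ord (leqnSn J) k).
  by apply: val_inj.
by rewrite !fconsS.
Qed.

Lemma costw_cons (R : realType) (T : finType) (A : T -> T -> R) J a (g : {ffun 'I_J.+1 -> T}) :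
  costw A (fcons a g) = A a (g ord0) + costw A g.
Proof.
rewrite /costw big_ord_recl.
have -> : widen_ord (leqnSn J.+1) ord0 = ord0 :> 'I_J.+2 by apply: val_inj.
rewrite fcons0 fconsS; congr (_ + _); apply: eq_bigr => k _.
have -> : widen_ord (leqnSn J.+1) (lift ord0 k) = lift ord0 (widen_ord (leqnSn J) k).
  by apply: val_inj.
by rewrite !fconsS.
Qed.

Lemma sum_cons (R : realType) (T : finType) J a (F : {ffun 'I_J.+2 -> T} -> R) :
  \sum_(l : {ffun 'I_J.+2 -> T} | l ord0 == a) F l = \sum_(g : {ffun 'I_J.+1 -> T}) F (fcons a g).
Proof.
rewrite (reindex_onto (@fcons T J a) (@ftail T J)); last first.
  by move=> l /eqP <-; rewrite fconsK.
by apply: eq_bigl => g; rewrite fcons0 ftailK !eqxx.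
Qed.

Lemma sum_one (R : realType) (T : finType) a (F : {ffun 'I_1 -> T} -> R) :
  \sum_(l : {ffun 'I_1 -> T} | l ord0 == a) F l = F [ffun => a].
Proof.
apply: big_pred1 => l /=; apply/eqP/eqP => [<-|->]; last by rewrite ffunE.
by apply/ffunP => i; rewrite ffunE (ord1 i).
Qed.

Lemma WP_ffun (R : realType) (N M : nat) (A : node N M -> node N M -> R) J h a :
  \sum_(l : {ffun 'I_J.+1 -> node N M} | l ord0 == a) prodw A l * h (l ord_max) = WP A J h a.
Proof.
elim: J a => [|J IH] a.
  by rewrite sum_one /prodw big_ord0 mul1r ffunE.
rewrite sum_cons /=.
under eq_bigr do rewrite prodw_cons fcons_max -mulrA.
rewrite (partition_big (fun g : {ffun 'I_J.+1 -> node N M} => g ord0) xpredT) //=.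
apply: eq_bigr => b _; rewrite -IH mulr_sumr; apply: eq_bigr => g /eqP ->.
by [].
Qed.

Lemma WC_ffun (R : realType) (N M : nat) (A cc : node N M -> node N M -> R) J h a :
  \sum_(l : {ffun 'I_J.+1 -> node N M} | l ord0 == a) prodw A l * costw cc l * h (l ord_max)
  = WC A cc J h a.
Proof.
elim: J a => [|J IH] a.
  by rewrite sum_one /costw big_ord0 mulr0 mul0r.
rewrite sum_cons /=.
under eq_bigr do rewrite prodw_cons costw_cons fcons_max.
rewrite (partition_big (fun g : {ffun 'I_J.+1 -> node N M} => g ord0) xpredT) //=.
apply: eq_bigr => b _; rewrite -IH -WP_ffun mulrDr mulr_sumr mulr_sumr mulr_sumr -big_split /=.
apply: eq_bigr => g /eqP ->; rewrite /=; ring.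
Qed.

Lemma WP_S (R : realType) (N M : nat) (A : node N M -> node N M -> R) J h a :
  WP A J.+1 h a = \sum_b A a b * WP A J h b.
Proof. by []. Qed.
Lemma WC_S (R : realType) (N M : nat) (A cc : node N M -> node N M -> R) J h a :
  WC A cc J.+1 h a = \sum_b A a b * (cc a b * WP A J h b + WC A cc J h b).
Proof. by []. Qed.

Definition ccost (R : realType) (N M : nat) (beta : 'I_N -> node N M -> R)
  (rho : 'I_N -> R) (p : node N M -> R * R) (a b : node N M) : R :=
  extm beta a b * sqd (p a) (p b) + extv rho b.

Lemma rho_shift (R : realType) (N M : nat) J (l : {ffun 'I_J.+2 -> node N M}) (r : node N M -> R) :
  r (l ord_max) = 0 ->
  \sum_(k < J.+1 | (0 < k)%N) r (l (widen_ord (leqnSn J.+1) k)) =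
  \sum_(k < J.+1) r (l (lift ord0 k)).
Proof.
move=> H; rewrite big_mkcond big_ord_recl /= add0r [RHS]big_ord_recr /=.
have -> : lift ord0 (ord_max : 'I_J.+1) = ord_max by apply: val_inj.
rewrite H addr0; apply: eq_bigr => k _ /=.
have -> : widen_ord (leqnSn J.+1) (lift ord0 k) = lift ord0 (widen_ord (leqnSn J) k).
  by apply: val_inj.
by [].
Qed.

Lemma extm_ge0 (R : realType) (N M : nat) (s : 'I_N -> node N M -> R) :
  normalized_flow s -> forall a b, 0 <= extm s a b.
Proof. by move=> [hs _] [i|j] b //=; case/andP: (hs i b). Qed.

Lemma prodw_ge0 (R : realType) (N M : nat) (s : 'I_N -> node N M -> R) J l :
  normalized_flow s -> 0 <= prodw (extm s) (J:=J) l.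
Proof. by move=> hs; apply: prodr_ge0 => k _; exact: extm_ge0. Qed.

Lemma gcoef_WC (R : realType) (N M : nat) (beta : 'I_N -> node N M -> R)
  (rho : 'I_N -> R) (p : node N M -> R * R) (s : 'I_N -> node N M -> R) n :
  normalized_flow s ->
  gcoef beta rho p s n = \sum_(J < N.+1) WC (extm s) (ccost beta rho p) J hFC (inl n).
Proof.
move=> hs; rewrite /gcoef big_mkcond; apply: eq_bigr => -[[|J] HJ] _ //.
rewrite -WC_ffun big_mkcond [RHS]big_mkcond /=; apply: eq_bigr => l _.
case: (boolP (path_ok s n l)) => [/and4P[/eqP l0 _ fc _]|npo].
  rewrite l0 eqxx /hFC fc mulr1 /prodw /costw big_split /=; congr (_ * (_ + _)).
  rewrite rho_shift //; case: (l ord_max) fc => //.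
case: (eqVneq (l ord0) (inl n)) => l0 //; rewrite /hFC.
case fc: (isFC (l ord_max)); last by rewrite mulr0.
suff -> : prodw (extm s) l = 0 by rewrite !mul0r.
move: npo; rewrite /path_ok l0 eqxx fc /= negb_and => /orP[/forallPn [k nap]|npos].
  rewrite /prodw (bigD1 k) //=; case: (l (widen_ord (leqnSn J.+1) k)) nap => //= j _.
  by rewrite mul0r.
by apply/eqP; rewrite eq_le prodw_ge0 // andbT leNgt.
Qed.

Lemma rowsum (R : realType) (N M : nat) (s : 'I_N -> node N M -> R) :
  normalized_flow s -> forall a, \sum_b extm s a b = (hAP a : R).
Proof. by move=> [_ [hs _]] [i|j] /=; [rewrite hs | rewrite big1]. Qed.

Lemma WP_ge0 (R : realType) (N M : nat) (s : 'I_N -> node N M -> R) J h :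
  normalized_flow s -> (forall a, 0 <= h a) -> forall a, 0 <= WP (extm s) J h a.
Proof.
move=> hs h0; elim: J => [|J IH] a //=.
by apply: sumr_ge0 => b _; apply: mulr_ge0 => //; exact: extm_ge0.
Qed.

Lemma hAP_ge0 (R : realType) (N M : nat) (a : node N M) : 0 <= (hAP a : R).
Proof. by rewrite /hAP; case: ifP. Qed.

Lemma F1 (R : realType) (N M : nat) (s : 'I_N -> node N M -> R) :
  normalized_flow s -> forall K a,
  \sum_(J < K.+1) WP (extm s) J hFC a + WP (extm s) K hAP a = 1.
Proof.
move=> hs; elim=> [|K IH] a.
  by rewrite big_ord1 /=; case: a => ? /=; rewrite /hFC /hAP /= ?addr0 ?add0r.
rewrite big_ord_recl.
under eq_bigr => k _ do rewrite lift0.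
rewrite WP_S.
under eq_bigr => k _ do rewrite WP_S.
rewrite exchange_big -addrA -big_split /=.
under eq_bigr do rewrite -mulr_sumr -mulrDr IH mulr1.
by rewrite rowsum //; case: a => ? /=; rewrite /hFC /hAP /= ?addr0 ?add0r.
Qed.

Lemma walk (R : realType) (N M : nat) (s : 'I_N -> node N M -> R) :
  normalized_flow s -> forall K a, WP (extm s) K hAP a != 0 ->
  exists l : nat -> 'I_N, a = inl (l 0%N) /\ forall k, (k < K)%N -> 0 < s (l k) (inl (l k.+1)).
Proof.
move=> hs; elim=> [|K IH] a /=.
  case: a => [i|j] H; first by exists (fun _ => i).
  by rewrite /hAP /= eqxx in H.
move=> H.
case: (pickP (fun b => extm s a b * WP (extm s) K hAP b != 0)) => [b Hb|H0]; last first.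
  by move: H; rewrite big1 ?eqxx // => b _; move/negbFE: (H0 b) => /eqP.
move: Hb; rewrite mulf_eq0 negb_or => /andP[Ha Hw]; clear H.
case: a Ha => [i|j] Ha; last by rewrite /= eqxx in Ha.
have [l [Eb Hl]] := IH b Hw.
exists (fun k => if k is k'.+1 then l k' else i); split => // -[|k] Hk /=.
  by rewrite -Eb lt_def Ha /=; exact: (extm_ge0 hs (inl i) b).
by apply: Hl.
Qed.

Lemma no_long_walk (R : realType) (N M : nat) (s : 'I_N -> node N M -> R) :
  normalized_flow s -> forall l : nat -> 'I_N,
  (forall k, (k < N)%N -> 0 < s (l k) (inl (l k.+1))) -> False.
Proof.
move=> hs l Hl.
have key : forall a b, (a < b <= N)%N -> l a = l b -> False.
  move=> a b /andP[ab bN] lab.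
  have := (proj2 (proj2 hs)) (b - a - 1)%N (fun k => l (a + k)%N).
  have -> : (a + (b - a - 1) = b.-1)%N by lia.
  rewrite addn0 lab.
  have Hb := Hl b.-1 ltac:(lia); rewrite prednK in Hb; last by lia.
  move=> H; suff E : s (l b.-1) (inl (l b)) = 0 by rewrite E ltxx in Hb.
  apply: H; apply: prodr_gt0 => k _; rewrite addnS; apply: Hl.
  by have := ltn_ord k; lia.
pose g := fun k : 'I_N.+1 => l k.
have : ~~ injectiveb g.
  by apply/negP => /injectiveP /leq_card; rewrite !card_ord ltnn.
case/injectivePn => x [y xy gxy].
case: (ltngtP x y) => [xy'|yx|exy].
- by apply: (key x y) => //; rewrite xy' /= -ltnS.
- by apply: (key y x) => //; rewrite yx /= -ltnS.
- by move: xy; rewrite (val_inj exy) eqxx.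
Qed.

Lemma Z_zero (R : realType) (N M : nat) (s : 'I_N -> node N M -> R) :
  normalized_flow s -> (0 < N)%N -> forall i j, 0 < s i (inl j) ->
  WP (extm s) N.-1 hAP (inl j) = 0.
Proof.
move=> hs N0 i j sij; apply/eqP; apply/negP => /negP /(walk hs) [l [Ej Hl]].
apply: (no_long_walk hs (l := fun k => if k is k'.+1 then l k' else i)).
move=> [|k] Hk /=; first by case: Ej => <-.
by apply: Hl; lia.
Qed.

Lemma support (R : realType) (N M : nat) (s : 'I_N -> node N M -> R) cc :
  normalized_flow s -> forall J a, WP (extm s) J hAP a = 0 ->
  WP (extm s) J.+1 hFC a = 0 /\ WC (extm s) cc J.+1 hFC a = 0.
Proof.
move=> hs; elim=> [|J IH] a.
  case: a => [i|j] /=; first by rewrite /hAP /= => /eqP; rewrite oner_eq0.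
  by move=> _; split; apply: big1 => b _; rewrite mul0r.
rewrite WP_S => H.
have Hb := psumr_eq0P (fun b _ => mulr_ge0 (extm_ge0 hs a b) (WP_ge0 J hs (@hAP_ge0 R N M) b)) H.
split; [rewrite WP_S|rewrite WC_S]; apply: big1 => b _; have := Hb b isT; move/eqP; rewrite mulf_eq0.
  move=> /orP[/eqP E|/eqP E]; first by rewrite E mul0r.
  by have [E1 E2] := IH _ E; rewrite E1 mulr0.
move=> /orP[/eqP E|/eqP E]; first by rewrite E mul0r.
by have [E1 E2] := IH _ E; rewrite E1 E2 mulr0 addr0 mulr0.
Qed.

Lemma WP_inr (R : realType) (N M : nat) (s : 'I_N -> node N M -> R) J j :
  WP (extm s) J hAP (inr j) = 0.
Proof. by case: J => [|J] /=; [rewrite /hAP | apply: big1 => b _; rewrite mul0r]. Qed.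

Lemma WC_inr (R : realType) (N M : nat) (s : 'I_N -> node N M -> R) cc J h j :
  WC (extm s) cc J h (inr j) = 0.
Proof. by case: J => [|J] //=; apply: big1 => b _; rewrite mul0r. Qed.

Definition Gc (R : realType) (N M : nat) (s : 'I_N -> node N M -> R) cc (b : node N M) : R :=
  \sum_(J < N.+1) WC (extm s) cc J hFC b.

Lemma G_inr (R : realType) (N M : nat) (s : 'I_N -> node N M -> R) cc j : Gc s cc (inr j) = 0.
Proof. by apply: big1 => J _; rewrite WC_inr. Qed.

Lemma G_rec (R : realType) (N M : nat) (s : 'I_N -> node N M -> R) cc :
  normalized_flow s -> (0 < N)%N -> forall i,
  Gc s cc (inl i) = \sum_b s i b * (cc (inl i) b + Gc s cc b).
Proof.
move=> hs N0 i; rewrite /Gc big_ord_recl add0r.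
under eq_bigr => k _ do rewrite lift0.
under eq_bigr => k _ do rewrite WC_S.
rewrite exchange_big; apply: eq_bigr => b _; rewrite -mulr_sumr.
have [sb0|sbp] := eqVneq (s i b) 0; first by rewrite /= sb0 !mul0r.
have sbp' : 0 < s i b by rewrite lt_def sbp /=; exact: (extm_ge0 hs (inl i) b).
clear sbp.
congr (_ * _); rewrite big_split /= -mulr_sumr.
have HF := F1 hs N.-1 b; rewrite prednK // in HF.
case: b sbp' HF => [j|j] sbp HF.
  rewrite (Z_zero hs N0 sbp) addr0 in HF; rewrite HF mulr1; congr (_ + _).
  have [_ HC] := support cc hs (Z_zero hs N0 sbp); rewrite prednK // in HC.
  rewrite [RHS]big_ord_recr /=.
  by rewrite HC addr0; apply: eq_bigr => k _; reflexivity.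
rewrite WP_inr addr0 in HF; rewrite HF mulr1.
by rewrite !big1 // => J _; rewrite WC_inr.
Qed.

Lemma flow_identity (R : realType) (N M : nat) (beta s : 'I_N -> node N M -> R)
  (rho : 'I_N -> R) (p : node N M -> R * R) (vv : 'I_N -> R) (F : 'I_N -> node N M -> R) :
  normalized_flow s -> (0 < N)%N ->
  (forall i, \sum_j F i j = vv i + \sum_(k < N) F k (inl i)) ->
  (forall i j, F i j = s i j * \sum_j' F i j') ->
  \sum_(i < N) \sum_(j : node N M) beta i j * sqd (p (inl i)) (p j) * F i j
   + \sum_(n < N) rho n * (\sum_(i < N) F i (inl n) + vv n)
  = \sum_(n < N) (gcoef beta rho p s n + rho n) * vv n.
Proof.
move=> hs N0 hF1 hF2.
pose G := Gc s (ccost beta rho p).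
pose a := fun i => \sum_j s i j * (beta i j * sqd (p (inl i)) (p j)).
pose Fo := fun i => \sum_j F i j.
have gG n : gcoef beta rho p s n = G (inl n) by rewrite gcoef_WC.
have cdef k : G (inl k) + rho k = a k + rho k + \sum_(n<N) s k (inl n) * (G (inl n) + rho n).
  rewrite /G G_rec // big_sumType /a big_sumType.
  have E1 : \sum_n s k (inl n) * (ccost beta rho p (inl k) (inl n) + Gc s (ccost beta rho p) (inl n))
     = \sum_n s k (inl n) * (beta k (inl n) * sqd (p (inl k)) (p (inl n)))
       + \sum_n s k (inl n) * (Gc s (ccost beta rho p) (inl n) + rho n).
    by rewrite -big_split; apply: eq_bigr => n _; rewrite /ccost /=; ring.
  have E2 : \sum_m s k (inr m) * (ccost beta rho p (inl k) (inr m) + Gc s (ccost beta rho p) (inr m))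
     = \sum_m s k (inr m) * (beta k (inr m) * sqd (p (inl k)) (p (inr m))).
    by apply: eq_bigr => m _; rewrite G_inr /ccost /=; ring.
  rewrite E1 E2 /=; ring.
have vvE n : vv n = Fo n - \sum_(k < N) F k (inl n) by rewrite /Fo hF1 addrK.
transitivity (\sum_(k < N) Fo k * (a k + rho k)).
  rewrite -big_split; apply: eq_bigr => i _ /=.
  rewrite [_ + vv i]addrC -hF1 -/(Fo i) mulrDr [Fo i * rho i]mulrC; congr (_ + _).
  rewrite /a mulr_sumr.
  by apply: eq_bigr => j _; rewrite (hF2 i j) -/(Fo i); ring.
have E3 : \sum_(k < N) Fo k * (a k + rho k) = \sum_(k < N) Fo k * (G (inl k) + rho k)
   - \sum_(k < N) Fo k * \sum_(n<N) s k (inl n) * (G (inl n) + rho n).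
  by rewrite -sumrB; apply: eq_bigr => k _; rewrite cdef; ring.
have E4 : \sum_(k < N) Fo k * \sum_(n<N) s k (inl n) * (G (inl n) + rho n)
   = \sum_(n < N) (G (inl n) + rho n) * \sum_(k < N) F k (inl n).
  under eq_bigr do rewrite mulr_sumr.
  rewrite exchange_big /=; apply: eq_bigr => n _; rewrite mulr_sumr.
  by apply: eq_bigr => k _; rewrite (hF2 k (inl n)) -/(Fo k); ring.
rewrite E3 E4 -sumrB; apply: eq_bigr => n _; rewrite gG vvE; ring.
Qed.

Definition rbox (R : realType) (q : (rat * rat) * (rat * rat)) : set (plane R) :=
  (`]ratr q.1.1, ratr q.1.2[%classic : set (measurableTypeR R)) `*`
  (`]ratr q.2.1, ratr q.2.2[%classic : set (measurableTypeR R)).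

Lemma cont_meas (R : realType) (D : set (plane R)) (g : R * R -> R) :
  measurable D -> (forall x : R * R, D x -> {for x, continuous g}) ->
  measurable_fun D (g : plane R -> R).
Proof.
move=> mD cg; apply: (measurability _ (measurable_realfun.RGenOpens.measurableE R)).
move=> _ [_ [a [b ->]] <-].
pose good := fun q => (D `&` @rbox R q) `<=` (g @^-1` `]a, b[%classic).
have -> : D `&` g @^-1` `]a, b[%classic = D `&` \bigcup_(q in good) @rbox R q.
  apply/seteqP; split => x /=.
    move=> [Dx gx]; split => //.
    have : nbhs (g x) `]a, b[%classic.
      by apply: open_nbhs_nbhs; split => //; exact: itv_open.
    move=> /(cg x Dx) /nbhs_ballP [e e0 He].
    have e0' : 0 < e := e0.
    have [q1 hq1] := @rat_in_itvoo R (x.1 - e) x.1 ltac:(lra).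
    have [q2 hq2] := @rat_in_itvoo R x.1 (x.1 + e) ltac:(lra).
    have [q3 hq3] := @rat_in_itvoo R (x.2 - e) x.2 ltac:(lra).
    have [q4 hq4] := @rat_in_itvoo R x.2 (x.2 + e) ltac:(lra).
    move: hq1 hq2 hq3 hq4; rewrite !in_itv /=.
    move=> /andP[h1 h1'] /andP[h2 h2'] /andP[h3 h3'] /andP[h4 h4'].
    exists ((q1, q2), (q3, q4)).
      move=> y [Dy [/= yb1 yb2]]; apply: He.
      move: yb1 yb2; rewrite /= !in_itv /= => /andP[y1 y1'] /andP[y2 y2'].
      split; rewrite /ball /= ltr_norml; apply/andP; split; lra.
    by split; rewrite /= in_itv /=; apply/andP.
  by move=> [Dx [q gq bq]]; split => //; apply: gq.
apply: measurableI => //; rewrite bigcup_mkcond.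
apply: countable_bigcupT_measurable; first exact: countableP.
move=> q; case: ifP => _ //; apply: measurableX; exact: measurable_itv.
Qed.

Lemma cont_fst (R : realType) (x : R * R) : {for x, continuous (fun w : R * R => w.1)}.
Proof. exact: cvg_fst. Qed.
Lemma cont_snd (R : realType) (x : R * R) : {for x, continuous (fun w : R * R => w.2)}.
Proof. exact: cvg_snd. Qed.

Lemma cont_sq1 (R : realType) (c : R) (u : R * R -> R) x :
  {for x, continuous u} -> {for x, continuous (fun w => (c - u w) ^+ 2)}.
Proof.
move=> cu.
have h : {for x, continuous (fun w => c - u w)}.
  by apply: (@continuousB _ _ _ (fun=> c) u) => //; exact: cst_continuous.
have -> : (fun w => (c - u w) ^+ 2) = (fun w => (c - u w) * (c - u w)).
  by apply/funext => w; rewrite expr2.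
exact: (continuousM h h).
Qed.

Lemma cont_sqd (R : realType) (q : R * R) (x : R * R) :
  {for x, continuous (fun w : R * R => sqd q w)}.
Proof.
rewrite /sqd.
apply: (@continuousD _ _ _ (fun w : R * R => (q.1 - w.1) ^+ 2) (fun w => (q.2 - w.2) ^+ 2)).
  by have := @cont_sq1 R q.1 (fun w => w.1) x (@cont_fst R x).
by have := @cont_sq1 R q.2 (fun w => w.2) x (@cont_snd R x).
Qed.

Lemma cont_aff (R : realType) (q : R * R) (e c : R) (x : R * R) :
  {for x, continuous (fun w : R * R => e * sqd q w + c)}.
Proof.
apply: (@continuousD _ _ _ (fun w : R * R => e * sqd q w) (fun=> c)); last exact: cst_continuous.
apply: (@continuousM _ _ (fun=> e) (fun w => sqd q w)); first exact: cst_continuous.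
exact: cont_sqd.
Qed.


Lemma cont_rsum (R : realType) k (c : 'I_k -> R) :
  continuous (fun v : 'rV[R]_k => \sum_i v ord0 i * c i).
Proof.
move=> v.
suff H : forall r, {for v, continuous (fun w : 'rV[R]_k => \sum_(i <- r) w ord0 i * c i)}.
  exact: H.
elim=> [|a r IH].
  have -> : (fun w : 'rV[R]_k => \sum_(i <- [::]) w ord0 i * c i) = fun=> 0.
    by apply/funext => w; rewrite big_nil.
  exact: cst_continuous.
have -> : (fun w : 'rV[R]_k => \sum_(i <- a :: r) w ord0 i * c i) =
  (fun w => w ord0 a * c a + \sum_(i <- r) w ord0 i * c i).
  by apply/funext => w; rewrite big_cons.
apply: (@continuousD _ _ _ (fun w : 'rV[R]_k => w ord0 a * c a)) => //.
apply: (@continuousM _ _ (fun w : 'rV[R]_k => w ord0 a) (fun=> c a)).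
  exact: coord_continuous.
exact: cst_continuous.
Qed.

Lemma hull_compact (R : realType) (vs : seq (R * R)) : compact (convex_hull vs).
Proof.
pose k := size vs.
pose phi := fun v : 'rV[R]_k => (\sum_i v ord0 i * (nth (0, 0) vs i).1,
                                 \sum_i v ord0 i * (nth (0, 0) vs i).2).
pose box := [set v : 'rV[R]_k | forall i, `[(0:R), 1]%classic (v ord0 i)].
pose S := [set v : 'rV[R]_k | \sum_i v ord0 i * 1 = 1].
have cS : closed S.
  have h1 := proj1 (continuous_closedP _) (@cont_rsum R k (fun=> 1)).
  have h2 := h1 [set 1] (@closed_eq R 1).
  exact: h2.
have cD : compact (box `&` S).
  apply: compact_closedI cS.
  exact: (@rV_compact R k (fun=> `[(0:R), 1]%classic) (fun=> @segment_compact R 0 1)).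
have -> : convex_hull vs = phi @` (box `&` S).
  apply/seteqP; split => x.
    move=> [lam [l0 [l1 ->]]]; exists (\row_i lam i).
      split.
        move=> i; rewrite /= in_itv /= mxE l0 /=.
        by rewrite -l1 (bigD1 i) //= lerDl sumr_ge0.
      by rewrite /S /=; under eq_bigr do rewrite mxE mulr1.
    by rewrite /phi; congr pair; apply: eq_bigr => i _; rewrite mxE.
  move=> [v [bv sv] <-].
  exists (fun j => oapp (fun i : 'I_k => v ord0 i) 0 (insub j)); split.
    by move=> j; case: insubP => //= i _ _; have := bv i; rewrite /= in_itv /= => /andP[].
  split.
    by move: sv; rewrite /S /=; under eq_bigr do rewrite mulr1; move=> <-; apply: eq_bigr => i _; rewrite valK.
  by rewrite /phi; congr pair; apply: eq_bigr => i _; rewrite valK.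
apply: continuous_compact => //; apply: continuous_subspaceT => v.
have h := cvg_pair (@cont_rsum R k (fun i => (nth (0, 0) vs i).1) v) (@cont_rsum R k (fun i => (nth (0, 0) vs i).2) v).
exact: h.
Qed.

Lemma mk_bounded (R : realType) (T : Type) (A : set T) (g : T -> R) C :
  (forall x, A x -> `|g x| <= C) -> [bounded g x | x in A].
Proof.
move=> H; exists C; split; first exact: num_real.
by move=> M CM x Ax /=; apply: le_trans (ltW CM); exact: H.
Qed.

Lemma compact_bnd (R : realType) (A : set R) : compact A -> exists C, forall x, A x -> `|x| <= C.
Proof.
move=> /compact_bounded [M [_ HM]]; exists (`|M| + 1) => x Ax.
by apply: (HM (`|M| + 1)) => //; rewrite (le_lt_trans (ler_norm M)) // ltrDl.
Qed.

Lemma compact_bnd2 (R : realType) (A : set (R * R)) : compact A ->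
  exists C, forall x, A x -> `|x.1| <= C /\ `|x.2| <= C.
Proof.
move=> /compact_bounded [M [_ HM]]; exists (`|M| + 1) => x Ax.
have := HM (`|M| + 1) ltac:(by rewrite (le_lt_trans (ler_norm M)) // ltrDl) x Ax.
by rewrite /= prod_normE ge_max => /andP[].
Qed.

Definition sqbox (R : realType) (B : R) : set (plane R) :=
  (`[-B, B]%classic : set (measurableTypeR R)) `*` (`[-B, B]%classic : set (measurableTypeR R)).

Lemma box_finite (R : realType) (B : R) :
  (@leb2 R (sqbox B) < +oo)%E.
Proof.
rewrite /leb2 /sqbox product_measure1E; [|exact: measurable_itv|exact: measurable_itv].
change (@lebesgue_measure R [set` `[-B, B]%R] * @lebesgue_measure R [set` `[-B, B]%R] < +oo)%E.
rewrite lebesgue_measure_itv /=; case: ifP => _; last by rewrite mul0e ltry.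
by rewrite -EFinM ltry.
Qed.

Lemma int_on (R : realType) (Om : set (R * R)) (A : set (plane R)) (g : plane R -> R) B C :
  measurable A -> A `<=` Om -> (forall x, Om x -> `|x.1| <= B /\ `|x.2| <= B) ->
  measurable_fun A g -> (forall x, A x -> `|g x| <= C) ->
  (@leb2 R).-integrable A (EFin \o g).
Proof.
move=> mA AOm OmB mg gC; apply: measurable_bounded_integrable => //; last exact: mk_bounded gC.
apply: le_lt_trans (box_finite B).
apply: le_measure; rewrite ?inE //.
  by apply: measurableX; exact: measurable_itv.
move=> x /AOm /OmB [h1 h2]; by split; rewrite /= in_itv /= -ler_norml.
Qed.

Lemma Rint_part (R : realType) (N : nat) (A : set (plane R)) (P : 'I_N -> set (plane R))
  (g : plane R -> R) :
  measurable A -> (forall m, measurable (P m)) ->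
  (forall m m', m != m' -> P m `&` P m' = set0) ->
  A `<=` \bigcup_m P m -> (@leb2 R).-integrable A (EFin \o g) ->
  Rintegral (@leb2 R) A g = \sum_(m < N) Rintegral (@leb2 R) (A `&` P m) g.
Proof.
move=> mA mP dP AP iA.
have eA : A = \big[setU/set0]_(m <- index_enum 'I_N) (A `&` P m).
  rewrite -bigcup_seq; apply/seteqP; split => x.
    move=> Ax; have [m _ Pmx] := AP x Ax; exists m => //=.
    by rewrite mem_index_enum.
  by move=> [m _ []].
have mF : forall m, measurable (A `&` P m) by move=> m; exact: measurableI.
rewrite /Rintegral {1}eA integral_bigsetU_EFin //; first last.
- by rewrite -eA; exact: (measurable_int _ iA).
- move=> i j _ _ [x [[_ Pi] [_ Pj]]]; apply/eqP; apply: contraT => ij.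
  have : (P i `&` P j) x by split.
  by rewrite (dP _ _ ij).
- exact: index_enum_uniq.
rewrite (_ : \sum_(i <- _) _ = (\sum_(m < N) fine (\int[@leb2 R]_(x in A `&` P m) (g x)%:E))%:E) //.
rewrite -sumEFin; apply: eq_bigr => m _; rewrite fineK //.
apply: integrable_fin_num => //; exact: integrableS iA.
Qed.

Lemma vc_cont (R : realType) (N M : nat) (eta : 'I_N -> R) (beta : 'I_N -> node N M -> R)
  (rho : 'I_N -> R) (lam : R) (p : node N M -> R * R) (s : 'I_N -> node N M -> R) n x :
  {for x, continuous (vcost eta beta rho lam p s n)}.
Proof.
have -> : vcost eta beta rho lam p s n =
  (fun w => eta n * sqd (p (inl n)) w + (lam * gcoef beta rho p s n + lam * rho n)).
  by apply/funext => w; rewrite /vcost addrA.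
exact: cont_aff.
Qed.

Lemma vc_meas (R : realType) (N M : nat) (eta : 'I_N -> R) (beta : 'I_N -> node N M -> R)
  (rho : 'I_N -> R) (lam : R) (p : node N M -> R * R) (s : 'I_N -> node N M -> R) n m :
  measurable_fun setT ((fun w => vcost eta beta rho lam p s n w - vcost eta beta rho lam p s m w) : plane R -> R).
Proof.
apply: (@cont_meas R setT (fun w : R * R => vcost eta beta rho lam p s n w - vcost eta beta rho lam p s m w)) => // x _.
apply: continuousB; exact: vc_cont.
Qed.

Lemma vor_meas (R : realType) (N M : nat) (Om : set (R * R)) (eta : 'I_N -> R) (beta : 'I_N -> node N M -> R)
  (rho : 'I_N -> R) (lam : R) (p : node N M -> R * R) (s : 'I_N -> node N M -> R) m :
  measurable (Om : set (plane R)) -> measurable (voronoi Om eta beta rho lam p s m).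
Proof.
move=> mOm.
pose vc := vcost eta beta rho lam p s.
pose S := fun k : 'I_N => [set w : plane R | ((k < m)%N -> vc m w < vc k w) /\ ((m < k)%N -> vc m w <= vc k w)].
have -> : voronoi Om eta beta rho lam p s m = Om `&` \bigcap_(k in setT) S k.
  apply/seteqP; split => w /= [Ow H]; split => //.
    by move=> k _; exact: (H k).
  by move=> k; exact: (H k I).
apply: measurableI => //; apply: fin_bigcap_measurable; first exact: finite_finset.
move=> k _.
have mh := vc_meas eta beta rho lam p s m k.
case: (ltngtP k m) => km.
- have -> : S k = (fun w => vc m w - vc k w) @^-1` `]-oo, 0[%classic.
    apply/seteqP; split => w /=.
      by move=> [H _]; rewrite in_itv /= subr_lt0; apply: H.
    rewrite in_itv /= subr_lt0 => H; split => // mk; by have := ltn_trans km mk; rewrite ltnn.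
  by rewrite -[X in measurable X]setTI; apply: mh => //; exact: measurable_itv.
- have -> : S k = (fun w => vc m w - vc k w) @^-1` `]-oo, 0]%classic.
    apply/seteqP; split => w /=.
      by move=> [_ H]; rewrite in_itv /= subr_le0; apply: H.
    rewrite in_itv /= subr_le0 => H; split => // mk; by have := ltn_trans km mk; rewrite ltnn.
  by rewrite -[X in measurable X]setTI; apply: mh => //; exact: measurable_itv.
- have -> : S k = setT.
    by apply/seteqP; split => w // _; split => c; move: c; rewrite km ltnn.
  exact: measurableT.
Qed.

Lemma vor_disj (R : realType) (N M : nat) (Om : set (R * R)) (eta : 'I_N -> R) (beta : 'I_N -> node N M -> R)
  (rho : 'I_N -> R) (lam : R) (p : node N M -> R * R) (s : 'I_N -> node N M -> R) m m' :
  m != m' -> voronoi Om eta beta rho lam p s m `&` voronoi Om eta beta rho lam p s m' = set0.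
Proof.
move=> mm'; apply/seteqP; split => // w [[_ H1] [_ H2]].
case: (ltngtP m m') => c.
- have := (H1 m').2 c; have := (H2 m).1 c; move=> a b.
  by have := lt_le_trans a b; rewrite ltxx.
- have := (H1 m').1 c; have := (H2 m).2 c; move=> a b.
  by have := lt_le_trans b a; rewrite ltxx.
- by move: mm'; rewrite (val_inj c) eqxx.
Qed.

Lemma vor_min (R : realType) (N M : nat) (Om : set (R * R)) (eta : 'I_N -> R) (beta : 'I_N -> node N M -> R)
  (rho : 'I_N -> R) (lam : R) (p : node N M -> R * R) (s : 'I_N -> node N M -> R) m w :
  voronoi Om eta beta rho lam p s m w -> forall n,
  vcost eta beta rho lam p s m w <= vcost eta beta rho lam p s n w.
Proof.
move=> [_ H] n; case: (ltngtP n m) => c.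
- exact/ltW/((H n).1 c).
- exact: (H n).2 c.
- by rewrite (val_inj c).
Qed.

Lemma vor_cover (R : realType) (N M : nat) (Om : set (R * R)) (eta : 'I_N -> R) (beta : 'I_N -> node N M -> R)
  (rho : 'I_N -> R) (lam : R) (p : node N M -> R * R) (s : 'I_N -> node N M -> R) :
  (0 < N)%N -> Om `<=` \bigcup_m voronoi Om eta beta rho lam p s m.
Proof.
move=> N0 w Ow.
pose vc := fun k => vcost eta beta rho lam p s k w.
pose i0 : 'I_N := Ordinal N0.
have [m0 _ Hm0] := @arg_minP _ R _ i0 xpredT vc isT.
pose P := fun i : 'I_N => [forall j, vc i <= vc j].
have Pm0 : P m0 by apply/forallP => j; exact: Hm0.
have [m Pm Hm] := arg_minnP (fun i : 'I_N => nat_of_ord i) Pm0.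
exists m => //; split => // k; split => [km|mk].
  rewrite ltNge; apply/negP => le_km.
  have Pk : P k.
    by apply/forallP => j; apply: le_trans le_km _; move/forallP: Pm; apply.
  by have := Hm k Pk; rewrite leqNgt km.
by move/forallP: Pm; apply.
Qed.

Lemma sqd_ge0 (R : realType) (x y : R * R) : 0 <= sqd x y.
Proof. by rewrite /sqd addr_ge0 // sqr_ge0. Qed.

Lemma gcoef_ge0 (R : realType) (N M : nat) (beta : 'I_N -> node N M -> R)
  (rho : 'I_N -> R) (p : node N M -> R * R) (s : 'I_N -> node N M -> R) n :
  (forall i j, 0 <= beta i j) -> (forall n, 0 <= rho n) -> 0 <= gcoef beta rho p s n.
Proof.
move=> b0 r0; apply: sumr_ge0 => J _; apply: sumr_ge0 => l /and4P[_ _ _ pos].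
apply: mulr_ge0; first exact: ltW.
apply: addr_ge0; apply: sumr_ge0 => k _.
  apply: mulr_ge0; last exact: sqd_ge0.
  by case: (l _) => //= i; exact: b0.
by case: (l _) => //= i; exact: r0.
Qed.

Lemma sqd_bnd (R : realType) (B : R) (q w : R * R) :
  `|q.1| <= B /\ `|q.2| <= B -> `|w.1| <= B /\ `|w.2| <= B -> sqd q w <= 8 * B ^+ 2.
Proof.
rewrite /sqd !ler_norml => -[/andP[a1 a2] /andP[a3 a4]] [/andP[b1 b2] /andP[b3 b4]].
nra.
Qed.

Unset Implicit Arguments.
Unset Strict Implicit.

Theorem proposition1 (R : realType) (N M : nat) (Om : set (R * R))
  (f : R * R -> R) (Rb : R) (eta : 'I_N -> R) (beta : 'I_N -> node N M -> R)
  (rho : 'I_N -> R) (lam : R) (p : node N M -> R * R)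
  (W : 'I_N -> set (plane R)) (s : 'I_N -> node N M -> R)
  (F FV : 'I_N -> node N M -> R) :
  (0 < N)%N -> (0 < M)%N ->
  convex_polygon Om ->
  {within Om, continuous f} ->
  (forall x, Om x -> differentiable f x) ->
  (forall x, Om x -> 0 < f x) ->
  0 < Rb ->
  (forall n, 0 < eta n) ->
  (forall i j, 0 < beta i j) ->
  (forall n, 0 <= rho n) ->
  0 <= lam ->
  (forall n, Om (p n)) ->
  cell_partition Om W ->
  normalized_flow s ->
  is_flow Rb f W s F ->
  is_flow Rb f (voronoi Om eta beta rho lam p s) s FV ->
  Dpow Rb f eta beta rho lam p (voronoi Om eta beta rho lam p s) FV
    <= Dpow Rb f eta beta rho lam p W F.
Proof.
move=> N0 M0 [vs [Omh _]] hcont hdiff fpos Rb0 eta0 beta0 rho0 lam0 pOm [mW [dW cW]] hs hF hFV.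
pose V := voronoi Om eta beta rho lam p s.
pose vc := vcost eta beta rho lam p s.
pose h := fun n (w : R * R) => vc n w * Rb * f w.
have cOm : compact Om by rewrite Omh; exact: hull_compact.
have [B HB] := compact_bnd2 cOm.
have [Bf HBf] : exists C, forall x, Om x -> `|f x| <= C.
  have [C HC] := compact_bnd (continuous_compact hcont cOm).
  by exists C => x Ox; apply: HC; exists x.
have WOm n : W n `<=` Om by move=> x Wx; apply/cW; exists n.
have mOm : measurable (Om : set (plane R)).
  have -> : Om = \bigcup_n W n.
    by apply/seteqP; split => x; [move/cW => [n Wx]; exists n | move=> [n _ Wx]; apply/cW; exists n].
  exact: (countable_bigcupT_measurable (countableP _) mW).
have VOm n : V n `<=` Om by move=> x [].
have mV n : measurable (V n) := vor_meas eta beta rho lam p s n mOm.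
have cf x : Om x -> {for x, continuous f} := fun Ox => differentiable_continuous (hdiff x Ox).
have mf (A : set (plane R)) : measurable A -> A `<=` Om -> measurable_fun A (f : plane R -> R).
  by move=> mA AOm; apply: cont_meas => // x Ax; apply: cf; exact: AOm.
have msqd (A : set (plane R)) q : measurable A -> measurable_fun A (sqd q : plane R -> R).
  by move=> mA; apply: cont_meas => // x _; exact: cont_sqd.
have mvc (A : set (plane R)) n : measurable A -> measurable_fun A (vc n : plane R -> R).
  by move=> mA; apply: cont_meas => // x _; exact: vc_cont.
have iA (A : set (plane R)) (g : plane R -> R) C : measurable A -> A `<=` Om -> measurable_fun A g ->
    (forall w, A w -> `|g w| <= C) -> (@leb2 R).-integrable A (EFin \o g).
  by move=> mA AOm mg gC; exact: (int_on mA AOm HB mg gC).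
have fB w : Om w -> f w <= Bf by move=> Ow; apply: le_trans (HBf w Ow); exact: ler_norm.
have g0 n : 0 <= gcoef beta rho p s n.
  by apply: gcoef_ge0 => // i j; exact: ltW.
have vcB n w : Om w -> 0 <= vc n w <= eta n * (8 * B ^+ 2) + lam * gcoef beta rho p s n + lam * rho n.
  move=> Ow; rewrite /vc /vcost; apply/andP; split.
    by rewrite !addr_ge0 // ?mulr_ge0 // ?sqd_ge0 // ltW.
  rewrite lerD2r lerD2r ler_wpM2l ?(ltW (eta0 n)) //.
  exact: sqd_bnd (HB _ (pOm _)) (HB _ Ow).
have ih (A : set (plane R)) n : measurable A -> A `<=` Om -> (@leb2 R).-integrable A (EFin \o (h n : plane R -> R)).
  move=> mA AOm; apply: (iA A _ ((eta n * (8 * B ^+ 2) + lam * gcoef beta rho p s n + lam * rho n) * Rb * Bf)) => //.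
    apply: measurable_realfun.measurable_funM; last exact: mf.
    by apply: measurable_realfun.measurable_funM; [exact: mvc | exact: measurable_cst].
  move=> w Aw; have Ow := AOm w Aw; have /andP[v0 v1] := vcB n w Ow.
  rewrite /h ger0_norm; last by rewrite !mulr_ge0 // ?ltW // fpos.
  apply: ler_pM.
  - by rewrite mulr_ge0 // ltW.
  - exact: ltW (fpos w Ow).
  - by rewrite ler_wpM2r // ltW.
  - exact: fB.
have ia (A : set (plane R)) n : measurable A -> A `<=` Om ->
    (@leb2 R).-integrable A (EFin \o ((fun w => eta n * sqd (p (inl n)) w * Rb * f w) : plane R -> R)).
  move=> mA AOm; apply: (iA A _ (eta n * (8 * B ^+ 2) * Rb * Bf)) => //.
    apply: measurable_realfun.measurable_funM; last exact: mf.
    apply: measurable_realfun.measurable_funM; last exact: measurable_cst.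
    by apply: measurable_realfun.measurable_funM; [exact: measurable_cst | exact: msqd].
  move=> w Aw; have Ow := AOm w Aw.
  have s1 := sqd_bnd (HB _ (pOm (inl n))) (HB _ Ow).
  rewrite ger0_norm; last by rewrite !mulr_ge0 // ?sqd_ge0 // ?ltW // fpos.
  apply: ler_pM.
  - by rewrite !mulr_ge0 ?sqd_ge0 // ltW.
  - exact: ltW (fpos w Ow).
  - apply: ler_wpM2r; first exact: ltW.
    by apply: ler_wpM2l => //; exact: ltW.
  - exact: fB.
have iF (A : set (plane R)) : measurable A -> A `<=` Om -> (@leb2 R).-integrable A (EFin \o (f : plane R -> R)).
  move=> mA AOm; apply: (iA A _ Bf) => //; first exact: mf.
  by move=> w Aw; exact: HBf (AOm w Aw).
have Dsum (X : 'I_N -> set (plane R)) FX : (forall n, measurable (X n)) -> (forall n, X n `<=` Om) ->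
    is_flow Rb f X s FX ->
    Dpow Rb f eta beta rho lam p X FX = \sum_(n < N) Rintegral (@leb2 R) (X n) (h n).
  move=> mX XOm [hF1 hF2].
  have := @flow_identity R N M beta s rho p (fun n => Rb * vol f (X n)) FX hs N0 hF1 hF2.
  rewrite /Dpow => ->.
  rewrite mulr_sumr -big_split; apply: eq_bigr => n _ /=.
  have -> : Rintegral (@leb2 R) (X n) (h n) = Rintegral (@leb2 R) (X n)
      (fun w => eta n * sqd (p (inl n)) w * Rb * f w + (lam * (gcoef beta rho p s n + rho n) * Rb) * f w).
    by apply: eq_Rintegral => w _; rewrite /h /vc /vcost; ring.
  have iZ : (@leb2 R).-integrable (X n) (EFin \o ((fun w => (lam * (gcoef beta rho p s n + rho n) * Rb) * f w) : plane R -> R)).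
    apply: (iA (X n) _ (`|lam * (gcoef beta rho p s n + rho n) * Rb| * Bf) (mX n) (XOm n)).
      exact: (measurable_realfun.measurable_funM (measurable_cst (lam * (gcoef beta rho p s n + rho n) * Rb)) (mf _ (mX n) (XOm n))).
    by move=> w Xw; rewrite normrM ler_wpM2l //; exact: HBf (XOm n w Xw).
  rewrite RintegralD //; try exact: (ia (X n) n (mX n) (XOm n)).
  by rewrite RintegralZl //; [rewrite /vol; ring | exact: iF].
rewrite (Dsum V FV mV VOm hFV) (Dsum W F mW WOm hF).
have e1 : \sum_(n < N) Rintegral (@leb2 R) (W n) (h n) =
    \sum_(n < N) \sum_(m < N) Rintegral (@leb2 R) (W n `&` V m) (h n).
  apply: eq_bigr => n _; apply: Rint_part => //.
  - by move=> m m' mm'; exact: vor_disj.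
  - by move=> x Wx; apply: vor_cover => //; exact: WOm Wx.
  - exact: ih.
have e2 : \sum_(m < N) Rintegral (@leb2 R) (V m) (h m) =
    \sum_(m < N) \sum_(n < N) Rintegral (@leb2 R) (V m `&` W n) (h m).
  apply: eq_bigr => m _; apply: Rint_part => //.
  - by move=> x Vx; move/cW: (VOm m x Vx) => [n Wx]; exists n.
  - exact: ih.
rewrite e1 e2 exchange_big /=; apply: ler_sum => n _; apply: ler_sum => m _.
rewrite setIC; apply: le_Rintegral.
- exact: measurableI.
- by apply: ih; [exact: measurableI | move=> x [Wx _]; exact: WOm Wx].
- by apply: ih; [exact: measurableI | move=> x [Wx _]; exact: WOm Wx].
move=> w [Ww Vw]; have Ow := WOm n w Ww; rewrite /h.
apply: ler_wpM2r; first exact: ltW (fpos w Ow).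
apply: ler_wpM2r; first exact: ltW.
exact: vor_min Vw n.
Qed.
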